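(* Let $D$ and $E$ be finite sets of cells, where a cell is a pair $(i,j)\in\mathbb{Z}^2$ (row $i$, column $j$), and let $f:D\to E$ be a picture. For $A\in D$ define $r(A)=\mathrm{row}(A)-\mathrm{row}(f(A))$, and for $T\in E$ define $r'(T)=r(f^{-1}(T))=\mathrm{row}(f^{-1}(T))-\mathrm{row}(T)$. Then: (a) if $A,B\in D$ lie in the same row with $B$ to the left of $A$, then $r(B)\le r(A)$; (b) if $A,B\in D$ lie in the same column with $A=(i,j)$ and $B=(i+1,j)$, then $r(B)\le r(A)$; (c) if $T,T'\in E$ lie in the same row with $T'$ to the left of $T$, then $r'(T)\le r'(T')$; (d) if $T,T'\in E$ lie in the same column with $T=(i,j)$ and $T'=(i+1,j)$, then $r'(T)\le r'(T')$.
   Context: Rows are numbered from top to bottom and columns from left to right, so the cell $(i,j)$ is weakly above and weakly right of $(i',j')$ iff $i\le i'$ and $j\ge j'$; ''to the left'' means smaller column index. Lexicographic order on cells: $(i,j)$ precedes $(i',j')$ if $i<i'$, or $i=i'$ and $j<j'$. A picture between finite sets of cells $D$ and $E$ is a bijection $f:D\to E$ such that (1) for distinct $A,B\in D$ with $A$ weakly above and weakly right of $B$, $f(A)$ precedes $f(B)$ lexicographically, and (2) for distinct $A',B'\in E$ with $A'$ weakly above and weakly right of $B'$, $f^{-1}(A')$ precedes $f^{-1}(B')$ lexicographically. *)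

(* Defs.v *)
From HB Require Import structures.
From mathcomp Require Import all_boot all_order all_algebra.
From mathcomp Require Import finmap.
Set Implicit Arguments. Unset Strict Implicit. Unset Printing Implicit Defensive.
Import Order.TTheory GRing.Theory Num.Theory.
Local Open Scope ring_scope.
Local Open Scope fset_scope.

Definition cell := (int * int)%type.
Definition crow (c : cell) : int := c.1.
Definition ccol (c : cell) : int := c.2.

(* [wAR a b] : a is weakly above and weakly right of b. *)
Definition wAR (a b : cell) : bool := (crow a <= crow b) && (ccol b <= ccol a).

Definition lexlt (a b : cell) : bool :=
  (crow a < crow b) || ((crow a == crow b) && (ccol a < ccol b)).

Definition is_picture (D E : {fset cell}) (f : D -> E) (g : E -> D) : Prop :=
  [/\ cancel f g, cancel g f,
      (forall A B : D, A != B -> wAR (val A) (val B) ->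
         lexlt (val (f A)) (val (f B)))
    & (forall A B : E, A != B -> wAR (val A) (val B) ->
         lexlt (val (g A)) (val (g B)))].

Definition rD (D E : {fset cell}) (f : D -> E) (A : D) : int :=
  crow (val A) - crow (val (f A)).
Definition rE (D E : {fset cell}) (g : E -> D) (T : E) : int :=
  crow (val (g T)) - crow (val T).

(* Main.v *)
Require Import Defs.
From HB Require Import structures.
From mathcomp Require Import all_boot all_order all_algebra.
From mathcomp Require Import finmap.
From mathcomp Require Import zify.
Import Order.TTheory GRing.Theory Num.Theory.
Local Open Scope ring_scope.

Lemma lex_le (a b : cell) : lexlt a b -> crow a <= crow b.
Proof. rewrite /lexlt => /orP [H|/andP [/eqP H _]]; lia. Qed.

Lemma lex_eq (a b : cell) : lexlt a b -> crow a = crow b -> ccol a < ccol b.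
Proof. rewrite /lexlt => /orP [H|/andP [_ H]] E; lia. Qed.

Lemma gen (D E : {fset cell}) (f : D -> E) (g : E -> D) :
  is_picture f g -> forall A B : D, A != B -> wAR (val A) (val B) ->
  crow (val (f A)) <= crow (val (f B)) /\
  (crow (val (f A)) = crow (val (f B)) -> crow (val B) <= crow (val A)).
Proof.
case=> fK gK H1 H2 A B nAB w.
have L := H1 A B nAB w.
split; first exact: lex_le.
move=> Eq.
have c := @lex_eq _ _ L Eq.
have nf : f B != f A.
  apply/negP=> /eqP e. move/negP: nAB; apply; apply/eqP.
  by rewrite -(fK A) -(fK B) e.
have w' : wAR (val (f B)) (val (f A)).
  by rewrite /wAR; apply/andP; split; lia.
have := H2 _ _ nf w'. rewrite !fK. exact: lex_le.
Qed.

Theorem lemma3p3 (D E : {fset cell}) (f : D -> E) (g : E -> D) :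
  is_picture f g ->
  [/\ (forall A B : D, crow (val B) = crow (val A) -> ccol (val B) < ccol (val A) ->
         rD f B <= rD f A),
      (forall A B : D, val B = (crow (val A) + 1, ccol (val A)) ->
         rD f B <= rD f A),
      (forall T T' : E, crow (val T') = crow (val T) -> ccol (val T') < ccol (val T) ->
         rE g T <= rE g T')
    & (forall T T' : E, val T' = (crow (val T) + 1, ccol (val T)) ->
         rE g T <= rE g T')].
Proof.
move=> P.
have P' : is_picture g f.
  by case: P => a b c d; split.
have neq (F : {fset cell}) (X Y : F) : val X != val Y -> X != Y.
  by apply: contra => /eqP ->.
split.
- move=> A B e c.
  have nAB : A != B by apply: neq; apply/negP=> /eqP e'; rewrite e' in c; lia.
  have w : wAR (val A) (val B) by rewrite /wAR; apply/andP; split; lia.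
  have [h _] := @gen _ _ _ _ P _ _ nAB w. rewrite /rD. lia.
- move=> A B e.
  have nAB : A != B.
    apply: neq; rewrite e; apply/negP=> /eqP e'.
    have e2 : crow (val A) = crow (val A) + 1 by rewrite {1}e'.
    lia.
  have w : wAR (val A) (val B) by rewrite /wAR e /crow /ccol /=; apply/andP; split; lia.
  have [h1 h2] := @gen _ _ _ _ P _ _ nAB w. rewrite /rD.
  have rB : crow (val B) = crow (val A) + 1 by rewrite e.
  have [h|h] : crow (val (f A)) < crow (val (f B)) \/ crow (val (f A)) = crow (val (f B)) by lia.
    lia.
  have := h2 h. lia.
- move=> T T' e c.
  have nAB : T != T' by apply: neq; apply/negP=> /eqP e'; rewrite e' in c; lia.
  have w : wAR (val T) (val T') by rewrite /wAR; apply/andP; split; lia.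
  have [h _] := @gen _ _ _ _ P' _ _ nAB w. rewrite /rE. lia.
- move=> A B e.
  have nAB : A != B.
    apply: neq; rewrite e; apply/negP=> /eqP e'.
    have e2 : crow (val A) = crow (val A) + 1 by rewrite {1}e'.
    lia.
  have w : wAR (val A) (val B) by rewrite /wAR e /crow /ccol /=; apply/andP; split; lia.
  have [h1 h2] := @gen _ _ _ _ P' _ _ nAB w. rewrite /rE.
  have rB : crow (val B) = crow (val A) + 1 by rewrite e.
  have [h|h] : crow (val (g A)) < crow (val (g B)) \/ crow (val (g A)) = crow (val (g B)) by lia.
    lia.
  have := h2 h. lia.
Qed.
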